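(* Consider a GND instance and a reply $\varrho$-oracle ($\varrho\ge1$) for its requests. Let $p^0=(p^0_1,\dots,p^0_N)$ where, for each $i\in[N]$, $p^0_i\in P_i$ is the output of the oracle on $P_i$ with the toll function $\tau_i^0(e)=F_e(w_i(e))$, $e\in E$. Then $C(p^0) \le \varrho \cdot N^{\max_j \alpha_j} \cdot C^*$.
   Context: GND instance: finite resource set $E$; requests $i \in [N]$, each with a reply collection $P_i \subseteq 2^E$ and a weight vector $w_i \in \mathbb{Z}_{\geq 1}^E$; constants $q \in \mathbb{Z}_{\ge1}$, $\alpha_1,\dots,\alpha_q > 1$; for each $e$, $\sigma_e \geq 0$ and $\xi_{e,j} \geq 0$ (at least one $\xi_{e,j}>0$), and cost function $F_e(0)=0$, $F_e(l)=\sigma_e+\sum_j \xi_{e,j} l^{\alpha_j}$ for $l>0$. A feasible solution is $p=(p_1,\dots,p_N)$ with $p_i\in P_i$; load $l_e^p=\sum_{i:e\in p_i} w_i(e)$; total cost $C(p)=\sum_e F_e(l_e^p)$; $C^*$ is the minimum total cost. A reply $\varrho$-oracle, given a reply collection $R$ and tolls $\tau:E\to\mathbb{R}_{>0}$, returns $r\in R$ with $\sum_{e\in r}\tau(e)\le\varrho\sum_{e\in r'}\tau(e)$ for every $r'\in R$. *)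

(* Defs.v *)
From mathcomp Require Import all_boot all_order all_algebra.
From mathcomp Require Import reals exp.
Set Implicit Arguments. Unset Strict Implicit. Unset Printing Implicit Defensive.
Import Order.TTheory GRing.Theory Num.Theory.
Local Open Scope ring_scope.

Definition gnd_F (R : realType) (E : finType) (q : nat)
  (alpha : 'I_q -> R) (sigma : E -> R) (xi : E -> 'I_q -> R) (e : E) (l : nat) : R :=
  if l == 0%N then 0
  else sigma e + \sum_(j < q) xi e j * (l%:R `^ alpha j).

Definition gnd_load (E : finType) (N : nat) (w : 'I_N -> E -> nat)
  (p : 'I_N -> {set E}) (e : E) : nat :=
  (\sum_(i < N | e \in p i) w i e)%N.

Definition gnd_cost (R : realType) (E : finType) (N q : nat)
  (alpha : 'I_q -> R) (sigma : E -> R) (xi : E -> 'I_q -> R)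
  (w : 'I_N -> E -> nat) (p : 'I_N -> {set E}) : R :=
  \sum_(e : E) gnd_F alpha sigma xi e (gnd_load w p e).

Definition gnd_feasible (E : finType) (N : nat) (P : 'I_N -> {set {set E}})
  (p : 'I_N -> {set E}) : Prop :=
  forall i, p i \in P i.

Definition oracle_reply (R : realType) (E : finType) (rho : R)
  (Rc : {set {set E}}) (tau : E -> R) (r : {set E}) : Prop :=
  r \in Rc /\ forall r', r' \in Rc -> \sum_(e in r) tau e <= rho * \sum_(e in r') tau e.

(* max_j alpha_j (q >= 1 is assumed wherever this is used). *)
Definition alpha_max (R : realType) (q : nat) (alpha : 'I_q -> R) : R :=
  \big[Num.max/0]_(j < q) alpha j.

(* Main.v *)
Require Import Defs.
From mathcomp Require Import all_boot all_order all_algebra.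
From mathcomp Require Import all_classical reals exp convex hoelder interval_inference.
From mathcomp Require Import ring lra.
Import Order.TTheory GRing.Theory Num.Theory.
Local Open Scope ring_scope.
Lemma conv2 {R : realType} (a t x y : R) : 1 <= a -> 0 <= t -> t <= 1 -> 0 <= x -> 0 <= y ->
  (t*x + (1-t)*y)`^a <= t*x`^a + (1-t)*y`^a.
Proof.
move=> a1 t0 t1 x0 y0.
have := convex_powR a1 (Itv01 t0 t1).
move=> /(_ x y); rewrite !convRE /=.
apply; rewrite inE /= in_itv /= andbT //.
Qed.

Lemma mean_pow (R : realType) (T : Type) (a : R) (r : seq T) (g : T -> R) :
  1 <= a -> (forall i, 0 <= g i) ->
  ((\sum_(i <- r) g i) / (size r)%:R) `^ a <= (\sum_(i <- r) g i `^ a) / (size r)%:R.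
Proof.
move=> a1 g0; elim: r => [|x r IH].
  by rewrite !big_nil mul0r powR0 // gt_eqF // (lt_le_trans ltr01 a1).
rewrite !big_cons /=.
have [r0|rn0] := eqVneq (size r) 0%N.
  rewrite (size0nil r0) !big_nil !addr0 /=. by rewrite !divr1.
set k : R := (size r)%:R.
have k0 : 0 < k by rewrite ltr0n lt0n.
set S := \sum_(i <- r) g i.
have S0 : 0 <= S by apply: sumr_ge0.
pose t := k / (k + 1).
have -> : (g x + S) / (size r).+1%:R = t * (S / k) + (1 - t) * g x.
  rewrite /t -addn1 natrD -/k; field; rewrite ?gt_eqF //; lra.
have t0 : 0 <= t by rewrite /t divr_ge0 //; lra.
have t1 : t <= 1 by rewrite /t ler_pdivrMr; lra.
have := @conv2 R a t (S / k) (g x) a1 t0 t1 (divr_ge0 S0 (ltW k0)) (g0 x).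
move/le_trans; apply.
apply: le_trans (_ : t * ((\sum_(i <- r) g i `^ a) / k) + (1 - t) * g x `^ a <= _).
  by rewrite lerD2r ler_wpM2l.
rewrite /t -addn1 natrD -/k.
rewrite le_eqVlt; apply/orP; left; apply/eqP; field; rewrite ?gt_eqF //; lra.
Qed.

Lemma pow_sum {R : realType} {T : Type} (a : R) (r : seq T) (g : T -> R) :
  1 <= a -> (forall i, 0 <= g i) ->
  (\sum_(i <- r) g i) `^ a <= (size r)%:R `^ (a - 1) * \sum_(i <- r) g i `^ a.
Proof.
move=> a1 g0.
have a0 : 0 < a by apply: lt_le_trans a1.
have [r0|rn0] := eqVneq (size r) 0%N.
  by rewrite (size0nil r0) !big_nil powR0 ?gt_eqF // mulr0.
set n : R := (size r)%:R.
have n0 : 0 < n by rewrite ltr0n lt0n.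
have -> : \sum_(i <- r) g i = n * ((\sum_(i <- r) g i) / n).
  by rewrite mulrC divfK // gt_eqF.
rewrite powRM ?(ltW n0) ?divr_ge0 ?sumr_ge0 ?(ltW n0) //.
apply: le_trans (_ : n `^ a * ((\sum_(i <- r) g i `^ a) / n) <= _).
  by rewrite ler_wpM2l ?powR_ge0 // mean_pow.
rewrite -(mulr_powRB1 (ltW n0) a0) le_eqVlt; apply/orP; left; apply/eqP.
by field; rewrite gt_eqF.
Qed.

Lemma sum_le_size {R : realType} {T : eqType} (r : seq T) (f : T -> R) (c : R) :
  (forall i, i \in r -> f i <= c) -> \sum_(i <- r) f i <= (size r)%:R * c.
Proof.
elim: r => [|x r IH] H; first by rewrite big_nil mul0r.
rewrite big_cons /= -addn1 natrD mulrDl mul1r addrC lerD //.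
  by apply: IH => i ir; apply: H; rewrite inE ir orbT.
by apply: H; rewrite inE eqxx.
Qed.

Lemma leq_sum_mem {T : eqType} (r : seq T) (g : T -> nat) i :
  i \in r -> (g i <= \sum_(j <- r) g j)%N.
Proof.
elim: r => [|x r IH] //; rewrite inE big_cons => /orP [/eqP ->|ir].
  exact: leq_addr.
by apply: leq_trans (IH ir) _; exact: leq_addl.
Qed.

Lemma F_nz {R : realType} {E : finType} {q : nat} (alpha : 'I_q -> R)
  (sigma : E -> R) (xi : E -> 'I_q -> R) e (l : nat) : l != 0%N ->
  gnd_F alpha sigma xi e l = sigma e + \sum_(j < q) xi e j * (l%:R `^ alpha j).
Proof. by rewrite /gnd_F => /negbTE ->. Qed.

Lemma F_ge0 {R : realType} {E : finType} {q : nat} (alpha : 'I_q -> R)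
  (sigma : E -> R) (xi : E -> 'I_q -> R) e (l : nat) :
  0 <= sigma e -> (forall j, 0 <= xi e j) -> 0 <= gnd_F alpha sigma xi e l.
Proof.
move=> s0 x0; rewrite /gnd_F; case: eqP => // _.
by rewrite addr_ge0 // sumr_ge0 // => j _; rewrite mulr_ge0 ?powR_ge0.
Qed.

Lemma upper {R : realType} {E : finType} {q : nat} (alpha : 'I_q -> R)
  (sigma : E -> R) (xi : E -> 'I_q -> R) e {T : eqType} (r : seq T)
  (g : T -> nat) (M : nat) (A : R) :
  (forall j, 1 < alpha j) -> (forall j, alpha j <= A) -> 1 <= A -> 0 <= sigma e ->
  (forall j, 0 <= xi e j) -> (forall i, 1 <= g i)%N -> (size r <= M)%N ->
  gnd_F alpha sigma xi e (\sum_(i <- r) g i)%N <=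
    M%:R `^ (A - 1) * \sum_(i <- r) gnd_F alpha sigma xi e (g i).
Proof.
move=> a1 aA A1 s0 x0 g1 rM.
case: r rM => [|x r'] rM.
  by rewrite !big_nil /gnd_F eqxx mulr0.
set r := x :: r'.
have M1 : (1 <= M)%N by apply: leq_trans rM.
have M1' : 1 <= M%:R :> R by rewrite ler1n.
have K1 : 1 <= M%:R `^ (A - 1) :> R.
  by rewrite -{1}(powRr0 (M%:R : R)); apply: (ler_powR M1'); rewrite subr_ge0.
have l0 : (\sum_(i <- r) g i)%N != 0%N.
  by rewrite big_cons -lt0n; apply: leq_trans (g1 x) (leq_addr _ _).
rewrite (F_nz _ _ _ _ _ l0).
under [X in _ <= _ * X]eq_bigr => i _ do rewrite F_nz -?lt0n //.
rewrite big_split /= mulrDr lerD //.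
  have ss : 0 <= \sum_(i <- r) sigma e by apply: sumr_ge0 => i _; exact: s0.
  apply: (@le_trans _ _ (\sum_(i <- r) sigma e)).
    by rewrite /r big_cons lerDl; apply: sumr_ge0 => i _; exact: s0.
  exact: ler_peMl.
rewrite exchange_big /= big_distrr /=; apply: ler_sum => j _.
rewrite -big_distrr /= mulrCA ler_wpM2l //.
rewrite natr_sum.
have := @pow_sum R T (alpha j) r (fun i => (g i)%:R) (ltW (a1 j)) (fun i => ler0n _ _).
move/le_trans; apply.
apply: ler_wpM2r; first by rewrite sumr_ge0 // => i _; rewrite powR_ge0.
apply: (@le_trans _ _ (M%:R `^ (alpha j - 1))).
  apply: ge0_ler_powR; rewrite ?nnegrE ?ler0n ?ler_nat //.
  by rewrite subr_ge0 ltW.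
by apply: (ler_powR M1'); rewrite lerD2r.
Qed.

Lemma lower {R : realType} {E : finType} {q : nat} (alpha : 'I_q -> R)
  (sigma : E -> R) (xi : E -> 'I_q -> R) e {T : eqType} (r : seq T)
  (g : T -> nat) (M : nat) :
  (forall j, 1 < alpha j) -> 0 <= sigma e ->
  (forall j, 0 <= xi e j) -> (forall i, 1 <= g i)%N -> (size r <= M)%N ->
  \sum_(i <- r) gnd_F alpha sigma xi e (g i) <=
    M%:R * gnd_F alpha sigma xi e (\sum_(i <- r) g i)%N.
Proof.
move=> a1 s0 x0 g1 rM.
case: r rM => [|x r'] rM.
  by rewrite !big_nil /gnd_F eqxx mulr0.
set r := x :: r'.
have l0 : (\sum_(i <- r) g i)%N != 0%N.
  by rewrite big_cons -lt0n; apply: leq_trans (g1 x) (leq_addr _ _).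
rewrite (F_nz _ _ _ _ _ l0).
under [X in X <= _]eq_bigr => i _ do rewrite F_nz -?lt0n //.
rewrite big_split /= mulrDr lerD //.
  have := @sum_le_size R T r (fun _ => sigma e) (sigma e) (fun _ _ => lexx _).
  move/le_trans; apply.
  by rewrite ler_wpM2r // ler_nat.
rewrite exchange_big /= big_distrr /=; apply: ler_sum => j _.
rewrite -big_distrr /= mulrCA ler_wpM2l //.
set c := _ `^ alpha j.
have : \sum_(i <- r) (g i)%:R `^ alpha j <= (size r)%:R * c.
  apply: sum_le_size => i ir; apply: ge0_ler_powR; rewrite ?nnegrE ?ler0n //.
    by apply: ltW; apply: lt_trans (a1 j).
  by rewrite ler_nat; apply: leq_sum_mem.
move/le_trans; apply.
by rewrite ler_wpM2r ?powR_ge0 // ler_nat.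
Qed.

Lemma swap_sum {R : realType} {E : finType} {N : nat} (p : 'I_N -> {set E})
  (f : E -> 'I_N -> R) :
  \sum_(e : E) \sum_(i < N | e \in p i) f e i = \sum_(i < N) \sum_(e in p i) f e i.
Proof.
under eq_bigr do rewrite big_mkcond.
rewrite exchange_big; apply: eq_bigr => i _.
by rewrite [RHS]big_mkcond.
Qed.

Theorem lemma5p2 (R : realType) (E : finType) (N q : nat)
  (P : 'I_N -> {set {set E}}) (w : 'I_N -> E -> nat)
  (alpha : 'I_q -> R) (sigma : E -> R) (xi : E -> 'I_q -> R) (rho : R)
  (p0 : 'I_N -> {set E}) :
  (0 < q)%N ->
  (forall i e, (1 <= w i e)%N) ->
  (forall j, 1 < alpha j) ->
  (forall e, 0 <= sigma e) ->
  (forall e j, 0 <= xi e j) ->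
  (forall e, exists j, 0 < xi e j) ->
  1 <= rho ->
  (forall i, oracle_reply rho (P i)
               (fun e => gnd_F alpha sigma xi e (w i e)) (p0 i)) ->
  forall p, gnd_feasible P p ->
  gnd_cost alpha sigma xi w p0 <=
    rho * (N%:R `^ alpha_max alpha) * gnd_cost alpha sigma xi w p.
Proof.
move=> q0 w1 a1 s0 x0 _ rho1 orc p feas.
set A := alpha_max alpha.
have aA : forall j, alpha j <= A by move=> j; exact: le_bigmax.
have A1 : 1 <= A by apply: le_trans (ltW (a1 (Ordinal q0))) (aA _).
set K : R := N%:R `^ (A - 1).
have K0 : 0 <= K by exact: powR_ge0.
have rho0 : 0 <= rho by apply: le_trans rho1.
have rN : forall Q : pred 'I_N, (size [seq i <- index_enum 'I_N | Q i] <= N)%N.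
  move=> Q; rewrite size_filter; apply: leq_trans (count_size _ _) _.
  by rewrite /index_enum unlock -enumT size_enum_ord.
have loadE : forall (p : 'I_N -> {set E}) e,
    gnd_load w p e = (\sum_(i <- [seq i <- index_enum 'I_N | e \in p i]) w i e)%N.
  by move=> p' e; rewrite big_filter.
pose f := fun e i => gnd_F alpha sigma xi e (w i e).
apply: (@le_trans _ _ (\sum_(e : E) K * \sum_(i < N | e \in p0 i) f e i)).
  rewrite /gnd_cost; apply: ler_sum => e _; rewrite loadE.
  have := upper alpha sigma xi e _ (fun i => w i e) N A a1 aA A1 (s0 e) (x0 e) (fun i => w1 i e) (rN (fun i => e \in p0 i)).
  by rewrite !big_filter; apply.
rewrite -big_distrr /= swap_sum.
apply: (@le_trans _ _ (K * \sum_(i < N) rho * \sum_(e in p i) f e i)).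
  rewrite ler_wpM2l //; apply: ler_sum => i _.
  exact: (proj2 (orc i)) (p i) (feas i).
rewrite -big_distrr /= -swap_sum mulrA.
apply: (@le_trans _ _ (K * rho * \sum_(e : E) N%:R * gnd_F alpha sigma xi e (gnd_load w p e))).
  rewrite ler_wpM2l ?mulr_ge0 //; apply: ler_sum => e _; rewrite loadE.
  have := lower alpha sigma xi e _ (fun i => w i e) N a1 (s0 e) (x0 e) (fun i => w1 i e) (rN (fun i => e \in p i)).
  by rewrite !big_filter; apply.
rewrite -big_distrr /= mulrA /gnd_cost.
rewrite le_eqVlt; apply/orP; left; apply/eqP; congr (_ * _).
rewrite /K -(mulr_powRB1 (ler0n _ N) (lt_le_trans ltr01 A1)).
ring.
Qed.
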